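(* Let $\mathcal{H}=\bigotimes_{i=1}^n\mathbb{C}^{d_i}$, let $|\psi\rangle\in\mathcal{H}$ be a fully entangled pure state whose stabilizer $\mathcal{S}_\psi$ consists only of unitary operators (i.e. $\mathcal{S}_\psi\subseteq U(d_1)\otimes\cdots\otimes U(d_n)$), and let $g=g_1\otimes\cdots\otimes g_n$, $h=h_1\otimes\cdots\otimes h_n$ with $g_i,h_i\in GL(d_i,\mathbb{C})$ such that $\|g|\psi\rangle\|=\|h|\psi\rangle\|=1$. Put $G=g^\dagger g$, $H=h^\dagger h$. If $g|\psi\rangle$ can be transformed into $h|\psi\rangle$ via SEP, then $\operatorname{tr}(G)\ge\operatorname{tr}(H)$. Moreover, if $\operatorname{tr}(G)=\operatorname{tr}(H)$, then $g|\psi\rangle$ can be transformed into $h|\psi\rangle$ via SEP if and only if there exist finitely many probabilities $p_k\ge0$ with $\sum_kp_k=1$ and symmetries $S_k\in\mathcal{S}_\psi$ such that $\sum_kp_kS_k^\dagger HS_k=G$, i.e. if and only if the transformation is possible via $\mathrm{SEP}_1$.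
   Context: A pure state is fully entangled if each single-party reduced density matrix $\rho_i$ has rank $d_i$. The stabilizer $\mathcal{S}_\psi$ is the set of operators $S=S^{(1)}\otimes\cdots\otimes S^{(n)}$ with $S^{(i)}\in GL(d_i,\mathbb{C})$ and $S|\psi\rangle=|\psi\rangle$. A CPTP map on $\mathcal{B}(\mathcal{H})$ is in SEP if it has a Kraus decomposition with all Kraus operators of product form $\bigotimes_jK^{(j)}$, $K^{(j)}\in M(d_j,\mathbb{C})$; it is in $\mathrm{SEP}_1$ if moreover all $K^{(j)}$ can be chosen in $GL(d_j,\mathbb{C})$. A state $|\alpha\rangle$ can be transformed into $|\beta\rangle$ via a class of maps if some map $\Lambda$ in the class satisfies $\Lambda(|\alpha\rangle\langle\alpha|)=|\beta\rangle\langle\beta|$. *)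

(* Defs.v *)
From HB Require Import structures.
From mathcomp Require Import all_boot all_order all_algebra.
From mathcomp Require Import complex reals.
Set Implicit Arguments. Unset Strict Implicit. Unset Printing Implicit Defensive.
Import Order.TTheory GRing.Theory Num.Theory.
Local Open Scope ring_scope.

Section Multipartite.
Variable R : realType.
Local Notation C := (R[i]).
Variable n : nat.
Variable d : 'I_n -> nat.

(* Computational basis of H = (x)_{i} C^{d_i}: tuples (k_1,...,k_n), k_i < d_i. *)
Definition idx := {dffun forall i : 'I_n, 'I_(d i)}.

Definition vec := idx -> C.
Definition op := idx -> idx -> C.

Definition locop := forall i : 'I_n, 'M[C]_(d i).

Definition tens (K : locop) : op :=
  fun x y => \prod_(i < n) K i (x i) (y i).

Definition opapp (A : op) (v : vec) : vec := fun x => \sum_y A x y * v y.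
Definition opmul (A B : op) : op := fun x z => \sum_y A x y * B y z.
Definition opadj (A : op) : op := fun x y => (A y x)^*.
Definition opid : op := fun x y => (x == y)%:R.
Definition optr (A : op) : C := \sum_x A x x.
Definition outer (v w : vec) : op := fun x y => v x * (w y)^*.
Definition vnorm2 (v : vec) : C := \sum_x v x * (v x)^*.

Definition mxadj m (M : 'M[C]_m) : 'M[C]_m := (map_mx Num.conj M)^T.
Definition unitary m (M : 'M[C]_m) : Prop := M *m mxadj M = 1%:M.

(* Single-party reduced density matrix rho_i = tr_{not i} |psi><psi|. *)
Definition reduced (psi : vec) (i : 'I_n) : 'M[C]_(d i) :=
  \matrix_(a, b) \sum_(x : {dffun forall j : 'I_n, 'I_(d j)} | x i == a)
     \sum_(y : {dffun forall j : 'I_n, 'I_(d j)} | (y i == b) &&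
        [forall j, (j != i) ==> (x j == y j)]) psi x * (psi y)^*.

Definition fully_entangled (psi : vec) : Prop :=
  forall i : 'I_n, \rank (reduced psi i) = d i.

Definition in_stab (psi : vec) (S : locop) : Prop :=
  (forall i, S i \in unitmx) /\ opapp (tens S) psi = psi.

Definition stab_unitary (psi : vec) : Prop :=
  forall S : locop, in_stab psi S ->
    exists U : locop, (forall i, unitary (U i)) /\ tens U = tens S.

Definition kraus_apply m (K : 'I_m -> locop) (rho : op) : op :=
  fun x y => \sum_(k < m) opmul (opmul (tens (K k)) rho) (opadj (tens (K k))) x y.

Definition kraus_tp m (K : 'I_m -> locop) : Prop :=
  (fun x y => \sum_(k < m) opmul (opadj (tens (K k))) (tens (K k)) x y) = opid.

Definition sep_transforms (alpha beta : vec) : Prop :=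
  exists m (K : 'I_m -> locop), kraus_tp K /\
    kraus_apply K (outer alpha alpha) = outer beta beta.

Definition sep1_transforms (alpha beta : vec) : Prop :=
  exists m (K : 'I_m -> locop), (forall k i, K k i \in unitmx) /\ kraus_tp K /\
    kraus_apply K (outer alpha alpha) = outer beta beta.

End Multipartite.

(* Main.v *)
Require Import Defs.
From HB Require Import structures.
From mathcomp Require Import all_boot all_order all_algebra.
From mathcomp Require Import complex reals.
From mathcomp Require Import ring.
From Stdlib Require Import FunctionalExtensionality IndefiniteDescription.
Import Order.TTheory GRing.Theory Num.Theory.
Local Open Scope ring_scope.
Set Implicit Arguments. Unset Strict Implicit. Unset Printing Implicit Defensive.
Section S.
Variable R : realType.
Local Notation C := (R[i]).
Variable n : nat.
Variable d : 'I_n -> nat.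
Local Notation idx := (idx d).
Local Notation op := (op R d).
Local Notation vec := (vec R d).
Local Notation locop := (locop R d).
Local Notation tens := (@tens R n d).
Local Notation opmul := (@opmul R n d).
Local Notation opadj := (@opadj R n d).
Local Notation opapp := (@opapp R n d).
Local Notation opid := (@opid R n d).
Local Notation optr := (@optr R n d).

Lemma prod_sum_dffun (F : forall i : 'I_n, 'I_(d i) -> C) :
  \prod_(i < n) \sum_(b : 'I_(d i)) F i b = \sum_(x : idx) \prod_(i < n) F i (x i).
Proof.
pose P_ := fun i => [ffun b : 'I_(d i) => F i b].
transitivity (\prod_(i < n) \sum_(b : 'I_(d i)) P_ i b).
  by apply: eq_bigr => i _; apply: eq_bigr => b _; rewrite ffunE.
under eq_bigr => i _ do rewrite (big_tag (fun i => P_ i) i).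
rewrite bigA_distr_big_dep.
have E := big_fprod 1 (GRing.Algebra_add__canonical__Monoid_AddLaw C) P_.
rewrite /= in E. rewrite -E.
rewrite (reindex (@fprod_of_dffun _ (fun i => 'I_(d i)))); last first.
  by apply: onW_bij; apply: fprod_of_dffun_bij.
apply: eq_bigr => x _; apply: eq_bigr => i _; rewrite ffunE.
by rewrite /fprod_of_dffun fprodE.
Qed.

Lemma opP (A B : op) : (forall x y, A x y = B x y) -> A = B.
Proof.
move=> H; apply: functional_extensionality => x.
by apply: functional_extensionality => y.
Qed.

Lemma vecP (v w : vec) : (forall x, v x = w x) -> v = w.
Proof. by move=> H; apply: functional_extensionality. Qed.

Lemma opmulA (A B D : op) : opmul (opmul A B) D = opmul A (opmul B D).
Proof.
apply: opP => x z; rewrite /Defs.opmul.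
under eq_bigr => y _ do rewrite big_distrl /=.
rewrite exchange_big /=; apply: eq_bigr => y _.
by rewrite big_distrr /=; apply: eq_bigr => w _; rewrite mulrA.
Qed.

Lemma opapp_mul (A B : op) v : opapp (opmul A B) v = opapp A (opapp B v).
Proof.
apply: vecP => x; rewrite /Defs.opapp /Defs.opmul.
under eq_bigr => y _ do rewrite big_distrl /=.
rewrite exchange_big /=; apply: eq_bigr => y _.
by rewrite big_distrr /=; apply: eq_bigr => w _; rewrite mulrA.
Qed.

Lemma sum_delta (F : idx -> C) x : \sum_y (x == y)%:R * F y = F x.
Proof.
rewrite (bigD1 x) //= eqxx mul1r big1 ?addr0 // => y /negbTE yx.
by rewrite eq_sym yx mul0r.
Qed.

Lemma sum_delta' (F : idx -> C) x : \sum_y F y * (y == x)%:R = F x.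
Proof.
rewrite (bigD1 x) //= eqxx mulr1 big1 ?addr0 // => y /negbTE yx.
by rewrite yx mulr0.
Qed.

Lemma opmul1l A : opmul opid A = A.
Proof. by apply: opP => x z; rewrite /Defs.opmul /Defs.opid sum_delta. Qed.

Lemma opmul1r A : opmul A opid = A.
Proof. by apply: opP => x z; rewrite /Defs.opmul /Defs.opid sum_delta'. Qed.

Lemma opapp1 v : opapp opid v = v.
Proof. by apply: vecP => x; rewrite /Defs.opapp /Defs.opid sum_delta. Qed.

Lemma opadjK A : opadj (opadj A) = A.
Proof. by apply: opP => x y; rewrite /Defs.opadj conjCK. Qed.

Lemma opadj_mul A B : opadj (opmul A B) = opmul (opadj B) (opadj A).
Proof.
apply: opP => x y; rewrite /Defs.opadj /Defs.opmul rmorph_sum.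
by apply: eq_bigr => z _ /=; rewrite rmorphM mulrC.
Qed.

Lemma opadj1 : opadj opid = opid.
Proof. by apply: opP => x y; rewrite /Defs.opadj /Defs.opid eq_sym conjC_nat. Qed.

Lemma tens_mul (A B : locop) :
  opmul (tens A) (tens B) = tens (fun i => A i *m B i).
Proof.
apply: opP => x z; rewrite /Defs.opmul /Defs.tens.
under [RHS]eq_bigr => i _ do rewrite mxE.
rewrite prod_sum_dffun; apply: eq_bigr => y _.
by rewrite -big_split.
Qed.

Lemma tens_adj (A : locop) : opadj (tens A) = tens (fun i => mxadj (A i)).
Proof.
apply: opP => x y; rewrite /Defs.opadj /Defs.tens rmorph_prod.
by apply: eq_bigr => i _; rewrite /mxadj !mxE.
Qed.

Lemma tens1 : tens (fun i => 1%:M) = opid.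
Proof.
apply: opP => x y; rewrite /Defs.tens /Defs.opid.
have [->|nxy] := eqVneq x y.
  by rewrite big1 // => i _; rewrite mxE eqxx.
have [i xi] : exists i, x i != y i.
  apply/existsP; apply: contraNT nxy => /existsPn H.
  by apply/eqP/ffunP => i; apply/eqP; move: (H i); rewrite negbK.
by rewrite (bigD1 i) //= mxE (negbTE xi) mul0r.
Qed.

Definition scal (c : C) : op := fun x y => c * opid x y.

Lemma tens_scale (A : locop) (i0 : 'I_n) (c : C) :
  tens (fun i => if i == i0 then c *: A i else A i) = fun x y => c * tens A x y.
Proof.
apply: opP => x y; rewrite /Defs.tens (bigD1 i0) //= eqxx mxE.
rewrite [in RHS](bigD1 i0) //= mulrA; congr (_ * _).
by apply: eq_bigr => i /negbTE ->.
Qed.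

Lemma opmulZl c A B : opmul (fun x y => c * A x y) B = fun x y => c * opmul A B x y.
Proof. apply: opP => x y; rewrite /Defs.opmul big_distrr; apply: eq_bigr => z _ /=; by rewrite mulrA. Qed.

Lemma opmulZr c A B : opmul A (fun x y => c * B x y) = fun x y => c * opmul A B x y.
Proof. apply: opP => x y; rewrite /Defs.opmul big_distrr; apply: eq_bigr => z _ /=; rewrite mulrCA //. Qed.

Lemma opadjZ c A : opadj (fun x y => c * A x y) = fun x y => c^* * opadj A x y.
Proof. by apply: opP => x y; rewrite /Defs.opadj rmorphM. Qed.

Lemma opappZ c A v : opapp (fun x y => c * A x y) v = fun x => c * opapp A v x.
Proof. apply: vecP => x; rewrite /Defs.opapp big_distrr; apply: eq_bigr => z _ /=; by rewrite mulrA. Qed.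

Lemma opmul_suml m (F : 'I_m -> op) B :
  opmul (fun x y => \sum_(k < m) F k x y) B = fun x y => \sum_(k < m) opmul (F k) B x y.
Proof.
apply: opP => x y; rewrite /Defs.opmul.
under eq_bigr => z _ do rewrite big_distrl /=.
by rewrite exchange_big.
Qed.

Lemma opmul_sumr m (F : 'I_m -> op) A :
  opmul A (fun x y => \sum_(k < m) F k x y) = fun x y => \sum_(k < m) opmul A (F k) x y.
Proof.
apply: opP => x y; rewrite /Defs.opmul.
under eq_bigr => z _ do rewrite big_distrr /=.
by rewrite exchange_big.
Qed.

Lemma mxadj_unitary m (U : 'M[C]_m) : unitary U -> mxadj U *m U = 1%:M.
Proof. by move=> H; apply: mulmx1C. Qed.

Lemma unitary_unit m (U : 'M[C]_m) : unitary U -> U \in unitmx.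
Proof. by move=> H; case: (mulmx1_unit H). Qed.

Lemma tens_unitary (U : locop) : (forall i, unitary (U i)) ->
  opmul (tens U) (opadj (tens U)) = opid /\ opmul (opadj (tens U)) (tens U) = opid.
Proof.
move=> HU; rewrite tens_adj !tens_mul -tens1; split; congr tens;
  apply: functional_extensionality_dep => i; [exact: HU | exact: mxadj_unitary].
Qed.

Lemma tens_inv (g : locop) : (forall i, g i \in unitmx) ->
  opmul (tens g) (tens (fun i => invmx (g i))) = opid /\
  opmul (tens (fun i => invmx (g i))) (tens g) = opid.
Proof.
move=> Hg; rewrite !tens_mul -tens1; split; congr tens;
  apply: functional_extensionality_dep => i; [exact: mulmxV | exact: mulVmx].
Qed.

Lemma optr_mulC A B : optr (opmul A B) = optr (opmul B A).
Proof.
rewrite /Defs.optr /Defs.opmul exchange_big /=.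
by apply: eq_bigr => x _; apply: eq_bigr => y _; rewrite mulrC.
Qed.

Lemma optr_conj_unitary (U : locop) H : (forall i, unitary (U i)) ->
  optr (opmul (opmul (opadj (tens U)) H) (tens U)) = optr H.
Proof.
move=> HU; have [H1 H2] := tens_unitary HU.
by rewrite optr_mulC -opmulA H1 opmul1l.
Qed.

Lemma optr_sum m (F : 'I_m -> op) :
  optr (fun x y => \sum_(k < m) F k x y) = \sum_(k < m) optr (F k).
Proof. by rewrite /Defs.optr exchange_big. Qed.

Lemma optrZ c A : optr (fun x y => c * A x y) = c * optr A.
Proof. by rewrite /Defs.optr big_distrr. Qed.

Lemma optr_adj_ge0 X : 0 <= optr (opmul (opadj X) X).
Proof.
rewrite /Defs.optr /Defs.opmul /Defs.opadj; apply: sumr_ge0 => x _.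
by apply: sumr_ge0 => y _; rewrite mulrC mul_conjC_ge0.
Qed.

Lemma optr_adj_eq0 X : optr (opmul (opadj X) X) = 0 -> X = (fun _ _ => 0).
Proof.
rewrite /Defs.optr /Defs.opmul /Defs.opadj => /eqP.
rewrite psumr_eq0 => [/allP H|x _]; last first.
  by apply: sumr_ge0 => y _; rewrite mulrC mul_conjC_ge0.
apply: opP => y x; move: (H x (mem_index_enum x)) => /=.
rewrite psumr_eq0 => [/allP H2|z _]; last by rewrite mulrC mul_conjC_ge0.
by move: (H2 y (mem_index_enum y)); rewrite mulrC mul_conjC_eq0 => /eqP.
Qed.

Local Notation outer := (@outer R n d).

Lemma opmul_outer A B v w :
  opmul (opmul A (outer v w)) (opadj B) = outer (opapp A v) (opapp B w).
Proof.
apply: opP => x y; rewrite /Defs.opmul /Defs.outer /Defs.opapp /Defs.opadj.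
rewrite rmorph_sum big_distrr /=; apply: eq_bigr => z _.
rewrite big_distrl /= big_distrl /=; apply: eq_bigr => u _.
by rewrite rmorphM; ring.
Qed.

Definition ip (v w : vec) : C := \sum_x (v x)^* * w x.

Lemma ip_conj v w : ip v w = (ip w v)^*.
Proof. by rewrite /ip rmorph_sum; apply: eq_bigr => x _; rewrite rmorphM /= conjCK mulrC. Qed.

Lemma ipip v u : ip v u * (ip v u)^* =
  \sum_x \sum_y ((v x)^* * v y) * (u x * (u y)^*).
Proof.
rewrite /ip rmorph_sum big_distrl /=; apply: eq_bigr => x _.
rewrite big_distrr /=; apply: eq_bigr => y _.
by rewrite rmorphM /= conjCK; ring.
Qed.

Lemma ip_ge0 v : 0 <= ip v v.
Proof. by apply: sumr_ge0 => x _; rewrite mulrC mul_conjC_ge0. Qed.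

Lemma ip_eq0 v : ip v v = 0 -> v = (fun _ => 0).
Proof.
rewrite /ip => /eqP; rewrite psumr_eq0 => [/allP H|x _]; last by rewrite mulrC mul_conjC_ge0.
apply: vecP => x; move: (H x (mem_index_enum x)).
by rewrite mulrC mul_conjC_eq0 => /eqP.
Qed.

Lemma sandwich m (w : 'I_m -> vec) (b : vec) :
  (forall x y, \sum_k w k x * (w k y)^* = b x * (b y)^*) ->
  forall v, \sum_k ip v (w k) * (ip v (w k))^* = ip v b * (ip v b)^*.
Proof.
move=> Hw v; rewrite ipip; under eq_bigr => k _ do rewrite ipip.
rewrite exchange_big /=; apply: eq_bigr => x _.
rewrite exchange_big /=; apply: eq_bigr => y _.
by rewrite -big_distrr /= Hw.
Qed.

Lemma rank_one m (w : 'I_m -> vec) (b : vec) :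
  vnorm2 b = 1 ->
  (forall x y, \sum_k w k x * (w k y)^* = b x * (b y)^*) ->
  (forall k, w k = (fun x => ip b (w k) * b x)) /\
  \sum_k ip b (w k) * (ip b (w k))^* = 1.
Proof.
move=> Hb Hw; have ipbb : ip b b = 1.
  by rewrite -Hb /ip /vnorm2; apply: eq_bigr => x _; rewrite mulrC.
split; last by rewrite (sandwich Hw) ipbb conjC1 mulr1.
move=> k; set c := ip b (w k).
pose r := fun x => w k x - c * b x.
have ipbr : ip b r = 0.
  rewrite /ip /r; under eq_bigr => x _ do rewrite mulrBr.
  rewrite sumrB; under [X in _ - X]eq_bigr => x _ do rewrite mulrCA.
  by rewrite -big_distrr /= -/(ip b b) ipbb mulr1 subrr.
have iprb : ip r b = 0 by rewrite ip_conj ipbr conjC0.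
have := sandwich Hw r; rewrite iprb mul0r => /eqP.
rewrite psumr_eq0 => [/allP H|j _]; last by rewrite mul_conjC_ge0.
move: (H k (mem_index_enum k)); rewrite mul_conjC_eq0 => /eqP iprw.
have e : ip r (w k) = ip r r + c * ip r b.
  rewrite /ip big_distrr -big_split; apply: eq_bigr => x _ /=; rewrite /r; ring.
rewrite iprw iprb mulr0 addr0 in e.
have /ip_eq0 r0 := esym e.
apply: vecP => x; move: (congr1 (fun f => f x) r0); rewrite /r /=.
by move/eqP; rewrite subr_eq0 => /eqP.
Qed.


Definition agree (i : 'I_n) (x y : idx) := [forall j, (j != i) ==> (x j == y j)].

Lemma sum_agree (i : 'I_n) (y : idx) (f : 'I_(d i) -> C) :
  \sum_(x | agree i x y) f (x i) = \sum_a f a.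
Proof.
pose G := fun (j : 'I_n) (b : 'I_(d j)) =>
  if j == i then \sum_(a : 'I_(d i) | val a == val b) f a else ((b == y j)%:R : C).
have GE : forall b : 'I_(d i), \sum_(a : 'I_(d i) | val a == val b) f a = f b.
  by move=> b; rewrite (big_pred1 b) // => a; rewrite /= val_eqE.
have := prod_sum_dffun G.
rewrite (bigD1 i) //= {1}/G eqxx.
under eq_bigr => b _ do rewrite GE.
have R1 : \prod_(j < n | j != i) \sum_(b : 'I_(d j)) G j b = 1.
  apply: big1 => j /negbTE ji; rewrite /G ji (bigD1 (y j)) //= eqxx big1 ?addr0 //.
  by move=> b /negbTE ->.
rewrite R1 mulr1 => ->; rewrite big_mkcond /=; apply: eq_bigr => x _.
rewrite (bigD1 i) //= {1}/G eqxx GE.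
case: ifP => Ha.
  rewrite big1 ?mulr1 // => j ji; rewrite /G (negbTE ji).
  by move/forallP: Ha => /(_ j); rewrite ji /= => ->.
have [j /andP [ji xj]] : exists j, (j != i) && (x j != y j).
  move/negbT: Ha; rewrite negb_forall => /existsP [j].
  by rewrite negb_imply => H; exists j.
by rewrite (bigD1 j) //= /G (negbTE ji) (negbTE xj) mul0r mulr0.
Qed.

Lemma inner_zero psi (T : locop) c (i : 'I_n) (u : 'rV[C]_(d i)) (y : idx) :
  c != 0 -> opapp (tens T) psi = (fun x => c * psi x) -> u *m T i = 0 ->
  \sum_(x | agree i x y) u 0 (x i) * psi x = 0.
Proof.
move=> c0 HT uT.
have pE : forall x, psi x = c^-1 * \sum_z tens T x z * psi z.
  move=> x; move: (congr1 (fun f => f x) HT); rewrite /= /Defs.opapp => ->.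
  by rewrite mulrA mulVf // mul1r.
under eq_bigr => x _ do rewrite pE big_distrr /= big_distrr /=.
rewrite exchange_big /= big1 // => z _.
pose Rest := \prod_(j < n | j != i) T j (y j) (z j).
transitivity (\sum_(x | agree i x y) (c^-1 * psi z * Rest) * (u 0 (x i) * T i (x i) (z i))).
  apply: eq_bigr => x Ha; rewrite /Defs.tens (bigD1 i) //=.
  have -> : \prod_(j < n | j != i) T j (x j) (z j) = Rest.
    apply: eq_bigr => j ji; move/forallP: Ha => /(_ j); rewrite ji /= => /eqP -> //.
  ring.
rewrite -big_distrr /= (sum_agree y (fun a => u 0 a * T i a (z i))).
have : (u *m T i) 0 (z i) = 0 by rewrite uT mxE.
by rewrite mxE => ->; rewrite mulr0.
Qed.

Lemma fe_unit psi (T : locop) c : fully_entangled psi -> c != 0 ->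
  opapp (tens T) psi = (fun x => c * psi x) -> forall i, T i \in unitmx.
Proof.
move=> FE c0 HT i; apply: contraT => nU.
have : kermx (T i) != 0 by rewrite kermx_eq0 row_free_unit.
case/rowV0Pn => u /sub_kermxP uT u0.
have rU : reduced psi i \in unitmx by rewrite -row_free_unit /row_free FE.
suff ur : u *m reduced psi i = 0.
  by move: u0; rewrite -[u]mulmx1 -(mulmxV rU) mulmxA ur mul0mx eqxx.
apply/rowP => b; rewrite !mxE.
under eq_bigr => a _ do rewrite mxE big_distrr /=.
pose F := fun x : idx => u 0 (x i) * \sum_(y : idx | (y i == b) && agree i x y) psi x * (psi y)^*.
transitivity (\sum_x F x).
  rewrite (partition_big (fun x : idx => x i) predT) //=.
  apply: eq_bigr => a _; apply: eq_bigr => x /eqP xa; rewrite /F xa big_distrr //.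
rewrite /F; under eq_bigr => x _ do rewrite big_distrr /= big_mkcond /=.
rewrite exchange_big /= big1 // => y _.
case: (eqVneq (y i) b) => yb /=; last by rewrite big1 // => x _; rewrite if_same.
rewrite -big_mkcond /=.
under eq_bigr => x _ do rewrite mulrA.
by rewrite -big_distrl /= (inner_zero y c0 HT uT) mul0r.
Qed.

Lemma opappZv c A v : opapp A (fun x => c * v x) = fun x => c * opapp A v x.
Proof. apply: vecP => x; rewrite /Defs.opapp big_distrr; apply: eq_bigr => z _ /=; by rewrite mulrCA. Qed.

Definition idl : locop := fun i => 1%:M.

Lemma mxadj1 m : mxadj (1%:M : 'M[C]_m) = 1%:M.
Proof. by rewrite /mxadj map_mx1 trmx1. Qed.

Lemma unitary1 m : unitary (1%:M : 'M[C]_m).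
Proof. by rewrite /unitary mxadj1 mulmx1. Qed.

Lemma in_stab_idl psi : in_stab psi idl.
Proof. by split=> [i|]; [exact: unitmx1 | rewrite /idl tens1 opapp1]. Qed.

Lemma opmul0 A : opmul (opadj (fun _ _ => 0 : C)) A = fun _ _ => 0.
Proof. by apply: opP => x y; rewrite /Defs.opmul big1 // => z _; rewrite /Defs.opadj conjC0 mul0r. Qed.

Lemma kraus_outer m (K : 'I_m -> locop) v x y :
  kraus_apply K (outer v v) x y =
  \sum_k opapp (tens (K k)) v x * (opapp (tens (K k)) v y)^*.
Proof. by rewrite /kraus_apply; apply: eq_bigr => k _; rewrite opmul_outer. Qed.

Lemma per_k (i0 : 'I_n) psi (g h K : locop) (c : C) :
  fully_entangled psi -> stab_unitary psi -> (forall i, h i \in unitmx) ->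
  opapp (tens K) (opapp (tens g) psi) = (fun x => c * opapp (tens h) psi x) ->
  exists SX : locop * op,
    ((forall i, unitary (SX.1 i)) /\ in_stab psi SX.1) /\
    opmul (opadj (opmul (tens K) (tens g))) (opmul (tens K) (tens g)) =
    fun x y => c * c^* * opmul (opmul (opadj (tens SX.1)) (opmul (opadj (tens h)) (tens h))) (tens SX.1) x y
       + opmul (opadj SX.2) SX.2 x y.
Proof.
move=> FE SU hU HK.
pose hinv : locop := fun i => invmx (h i).
pose T : locop := fun i => hinv i *m K i *m g i.
have [hh1 hh2] := tens_inv hU.
have tT : tens T = opmul (opmul (tens hinv) (tens K)) (tens g) by rewrite !tens_mul.
have XE : opmul (tens K) (tens g) = opmul (tens h) (tens T).
  by rewrite tT -!opmulA hh1 opmul1l.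
have Tpsi : opapp (tens T) psi = (fun x => c * psi x).
  by rewrite tT !opapp_mul HK opappZv -opapp_mul hh2 opapp1.
have [c0|cn0] := eqVneq c 0.
  exists (idl, opmul (tens K) (tens g)); split; first by split; [move=> i; exact: unitary1 | exact: in_stab_idl].
  by apply: opP => x y; rewrite c0 !mul0r add0r.
pose S0 : locop := fun i => if i == i0 then c^-1 *: T i else T i.
have TU := fe_unit FE cn0 Tpsi.
have tS0 : tens S0 = fun x y => c^-1 * tens T x y by rewrite /S0 tens_scale.
have stS0 : in_stab psi S0.
  split=> [i|]; first by rewrite /S0; case: ifP => _ //; rewrite unitmxZ // unitfE invr_eq0.
  by rewrite tS0 opappZ Tpsi; apply: vecP => x; rewrite mulrA mulVf // mul1r.
have [U [Uu UE]] := SU S0 stS0.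
exists (U, fun _ _ => 0); split; first by split=> //; split; [move=> i; exact: unitary_unit | rewrite UE; exact: stS0.2].
have tTU : tens T = fun x y => c * tens U x y.
  by rewrite UE tS0; apply: opP => x y; rewrite mulrA mulfV // mul1r.
rewrite XE tTU opmulZr opadjZ opmulZl opadj_mul /= opmul0.
apply: opP => x y; rewrite addr0 opmulZr !opmulA.
by rewrite mulrA [c^* * c]mulrC.
Qed.

Lemma sep_struct (i0 : 'I_n) psi (g h : locop) m (K : 'I_m -> locop) :
  fully_entangled psi -> stab_unitary psi -> (forall i, h i \in unitmx) ->
  vnorm2 (opapp (tens h) psi) = 1 ->
  kraus_tp K ->
  kraus_apply K (outer (opapp (tens g) psi) (opapp (tens g) psi)) =
    outer (opapp (tens h) psi) (opapp (tens h) psi) ->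
  exists (p : 'I_m -> C) (S : 'I_m -> locop) (X : 'I_m -> op),
   [/\ forall k, 0 <= p k, \sum_k p k = 1,
    forall k, (forall i, unitary (S k i)) /\ in_stab psi (S k) &
    opmul (opadj (tens g)) (tens g) = fun x y =>
      \sum_k p k * opmul (opmul (opadj (tens (S k))) (opmul (opadj (tens h)) (tens h))) (tens (S k)) x y
      + \sum_k opmul (opadj (X k)) (X k) x y].
Proof.
move=> FE SU hU Hb Htp Hap.
set al := opapp (tens g) psi; set be := opapp (tens h) psi.
pose w := fun k => opapp (tens (K k)) al.
have Hw : forall x y, \sum_k w k x * (w k y)^* = be x * (be y)^*.
  by move=> x y; rewrite -kraus_outer Hap.
have [wE psum] := rank_one Hb Hw.
have PK : forall k, exists SX : locop * op,
    ((forall i, unitary (SX.1 i)) /\ in_stab psi SX.1) /\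
    opmul (opadj (opmul (tens (K k)) (tens g))) (opmul (tens (K k)) (tens g)) =
    fun x y => ip be (w k) * (ip be (w k))^* * opmul (opmul (opadj (tens SX.1)) (opmul (opadj (tens h)) (tens h))) (tens SX.1) x y
       + opmul (opadj SX.2) SX.2 x y.
  move=> k; apply: (per_k i0 FE SU hU); exact: (wE k).
pose SX := fun k => proj1_sig (constructive_indefinite_description _ (PK k)).
have SXP := fun k => proj2_sig (constructive_indefinite_description _ (PK k)).
exists (fun k => ip be (w k) * (ip be (w k))^*), (fun k => (SX k).1), (fun k => (SX k).2).
split=> //; first by move=> k; exact: mul_conjC_ge0.
  by move=> k; exact: (SXP k).1.
have -> : opmul (opadj (tens g)) (tens g) = opmul (opmul (opadj (tens g))
    (fun x y => \sum_k opmul (opadj (tens (K k))) (tens (K k)) x y)) (tens g).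
  by rewrite Htp opmul1r.
rewrite opmul_sumr opmul_suml; apply: opP => x y; rewrite -big_split /=.
apply: eq_bigr => k _; have := congr1 (fun f => f x y) (SXP k).2 => /= <-.
by rewrite opadj_mul !opmulA.
Qed.

Lemma filter_sum m (p : 'I_m -> C) (F : 'I_m -> C) : (forall k, p k = 0 -> F k = 0) ->
  \sum_k F k = \sum_(j < #|[pred k | p k != 0]|) F (enum_val j).
Proof.
move=> H; rewrite -big_enum_val /= [RHS]big_mkcond; apply: eq_bigr => k _.
rewrite inE; case: eqVneq => [/H|] //.
Qed.

Lemma sqrt_conj (a : C) : 0 <= a -> (sqrtC a)^* * sqrtC a = a.
Proof. by move=> a0; rewrite geC0_conj ?sqrtC_ge0 // -expr2 sqrtCK. Qed.

Lemma unit3 m (A B D : 'M[C]_m) : A \in unitmx -> B \in unitmx -> D \in unitmx -> A *m B *m D \in unitmx.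
Proof. by move=> a b c; rewrite !unitmx_mul a b c. Qed.

Lemma sqrt_conj' (a : C) : 0 <= a -> sqrtC a * (sqrtC a)^* = a.
Proof. by move=> a0; rewrite mulrC sqrt_conj. Qed.

Lemma sep1_of_pS (i0 : 'I_n) psi (g h : locop) m (p : 'I_m -> C) (S : 'I_m -> locop) :
  (forall i, g i \in unitmx) -> (forall i, h i \in unitmx) ->
  (forall k, 0 <= p k) -> \sum_k p k = 1 -> (forall k, in_stab psi (S k)) ->
  (fun x y => \sum_k p k * opmul (opmul (opadj (tens (S k))) (opmul (opadj (tens h)) (tens h))) (tens (S k)) x y)
     = opmul (opadj (tens g)) (tens g) ->
  sep1_transforms (opapp (tens g) psi) (opapp (tens h) psi).
Proof.
move=> gU hU p0 p1 Sst HG.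
pose ginv : locop := fun i => invmx (g i).
have [gg1 gg2] := tens_inv gU.
pose e := fun j : 'I_#|[pred k | p k != 0]| => enum_val j.
have pe0 : forall j, p (e j) != 0.
  by move=> j; have := enum_valP j; rewrite inE.
pose M := fun j => (fun i => h i *m S (e j) i *m ginv i) : locop.
pose K := fun j => (fun i => if i == i0 then sqrtC (p (e j)) *: M j i else M j i) : locop.
have tM : forall j, tens (M j) = opmul (opmul (tens h) (tens (S (e j)))) (tens ginv).
  by move=> j; rewrite !tens_mul.
have tK : forall j, tens (K j) = fun x y => sqrtC (p (e j)) * tens (M j) x y.
  by move=> j; rewrite /K tens_scale.
exists #|[pred k | p k != 0]|, K; split; [|split].
- move=> j i; rewrite /K /M.
  have U3 := unit3 (hU i) ((Sst (e j)).1 i) (eq_ind_r is_true (gU i) (unitmx_inv (g i))).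
  case: ifP => _; last exact: U3.
  by rewrite unitmxZ // unitfE sqrtC_eq0.
- apply: opP => x y.
  have -> : opid x y = opmul (opmul (opadj (tens ginv)) (opmul (opadj (tens g)) (tens g))) (tens ginv) x y.
    by rewrite -opmulA opmulA -opadj_mul gg1 opadj1 opmul1l.
  rewrite -HG opmul_sumr opmul_suml /=.
  rewrite (filter_sum (p:=p)); last first.
    by move=> k pk0; rewrite opmulZr opmulZl pk0 mul0r.
  apply: eq_bigr => j _; rewrite tK opadjZ !opmulZl !opmulZr mulrA sqrt_conj //.
  rewrite (opmulZl (p (enum_val j))) /e; congr (_ * _); rewrite tM !opadj_mul !opmulA //.
- apply: opP => x y; rewrite kraus_outer.
  have Ka : forall j, opapp (tens (K j)) (opapp (tens g) psi) = fun x => sqrtC (p (e j)) * opapp (tens h) psi x.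
    move=> j; rewrite tK opappZ tM !opapp_mul -(opapp_mul (tens ginv)) gg2 opapp1 (Sst (e j)).2 //.
  under eq_bigr => j _ do rewrite Ka rmorphM mulrACA sqrt_conj' //.
  rewrite -big_distrl /= -(filter_sum (F:=p)) ?p1 ?mul1r // /Defs.outer.
Qed.

Lemma tens_n0 : n = 0%N -> forall K : locop, tens K = opid.
Proof.
move=> n0 K; apply: opP => x y.
have -> : x = y by apply/ffunP => -[i Hi]; exfalso; rewrite n0 in Hi.
by rewrite /Defs.tens /Defs.opid eqxx big1 // => -[i Hi]; exfalso; rewrite n0 in Hi.
Qed.

Lemma optrD A B : optr (fun x y => A x y + B x y) = optr A + optr B.
Proof. by rewrite /Defs.optr big_split. Qed.

End S.

Unset Implicit Arguments.

Theorem lemma2 (R : realType) (n : nat) (d : 'I_n -> nat) (psi : vec R d)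
    (g h : locop R d) :
  fully_entangled psi ->
  stab_unitary psi ->
  (forall i, g i \in unitmx) -> (forall i, h i \in unitmx) ->
  vnorm2 (opapp (tens g) psi) = 1 ->
  vnorm2 (opapp (tens h) psi) = 1 ->
  let G := opmul (opadj (tens g)) (tens g) in
  let H := opmul (opadj (tens h)) (tens h) in
  (sep_transforms (opapp (tens g) psi) (opapp (tens h) psi) ->
     optr H <= optr G) /\
  (optr G = optr H ->
     (sep_transforms (opapp (tens g) psi) (opapp (tens h) psi) <->
        exists m (p : 'I_m -> R[i]) (S : 'I_m -> locop R d),
          (forall k, 0 <= p k) /\ \sum_(k < m) p k = 1 /\
          (forall k, in_stab psi (S k)) /\
          (fun x y => \sum_(k < m) p k *
              opmul (opmul (opadj (tens (S k))) H) (tens (S k)) x y) = G) /\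
     (sep_transforms (opapp (tens g) psi) (opapp (tens h) psi) <->
        sep1_transforms (opapp (tens g) psi) (opapp (tens h) psi))).
Proof.
move=> FE SU gU hU ng nh G H.
have [n0|npos] := posnP n.
  have tE := tens_n0 n0.
  have GH : G = H by rewrite /G /H !tE.
  have AB : opapp (tens g) psi = opapp (tens h) psi by rewrite !tE.
  have sep1 : sep1_transforms (opapp (tens g) psi) (opapp (tens h) psi).
    exists 1%N, (fun _ => @idl R n d); split; first by move=> k i; exact: unitmx1.
    split.
      by apply: opP => x y; rewrite big_ord1 tE opadj1 opmul1l.
    by apply: opP => x y; rewrite kraus_outer big_ord1 tE opapp1 AB.
  have sep : sep_transforms (opapp (tens g) psi) (opapp (tens h) psi).
    by case: sep1 => m [K [_ HK]]; exists m, K.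
  split; first by rewrite GH.
  move=> _; split; last by split.
  split=> // _; exists 1%N, (fun _ => 1), (fun _ => @idl R n d).
  split=> //; split; first by rewrite big_ord1.
  split; first by move=> k; exact: in_stab_idl.
  by apply: opP => x y; rewrite big_ord1 mul1r /idl tens1 opadj1 opmul1l opmul1r GH.
pose i0 := Ordinal npos.
have struct := fun m K Htp Hap => @sep_struct _ _ _ i0 psi g h m K FE SU hU nh Htp Hap.
have decomp : forall m (K : 'I_m -> locop R d), kraus_tp K ->
    kraus_apply K (outer (opapp (tens g) psi) (opapp (tens g) psi)) =
      outer (opapp (tens h) psi) (opapp (tens h) psi) ->
  exists (p : 'I_m -> R[i]) (S : 'I_m -> locop R d) (X : 'I_m -> op R d),
   [/\ forall k, 0 <= p k, \sum_k p k = 1,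
    forall k, (forall i, unitary (S k i)) /\ in_stab psi (S k),
    G = (fun x y =>
      \sum_k p k * opmul (opmul (opadj (tens (S k))) H) (tens (S k)) x y
      + \sum_k opmul (opadj (X k)) (X k) x y) &
    optr G = optr H + \sum_k optr (opmul (opadj (X k)) (X k))].
  move=> m K Htp Hap; have [p [S [X [p0 p1 SS GE]]]] := struct m K Htp Hap.
  exists p, S, X; split=> //.
  rewrite /G GE optrD optr_sum; congr (_ + _); last by rewrite optr_sum.
  under eq_bigr => k _ do rewrite optrZ (optr_conj_unitary _ ((SS k).1)).
  by rewrite -big_distrl /= p1 mul1r.
split.
  case=> m [K [Htp Hap]]; have [p [S [X [p0 p1 SS GE trG]]]] := decomp m K Htp Hap.
  by rewrite trG lerDl; apply: sumr_ge0 => k _; exact: optr_adj_ge0.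
move=> trE.
have toPS : sep_transforms (opapp (tens g) psi) (opapp (tens h) psi) ->
        exists m (p : 'I_m -> R[i]) (S : 'I_m -> locop R d),
          (forall k, 0 <= p k) /\ \sum_(k < m) p k = 1 /\
          (forall k, in_stab psi (S k)) /\
          (fun x y => \sum_(k < m) p k *
              opmul (opmul (opadj (tens (S k))) H) (tens (S k)) x y) = G.
  case=> m [K [Htp Hap]]; have [p [S [X [p0 p1 SS GE trG]]]] := decomp m K Htp Hap.
  have : \sum_k optr (opmul (opadj (X k)) (X k)) = 0.
    by apply: (@addrI _ (optr H)); rewrite -trG trE addr0.
  move/eqP; rewrite psumr_eq0 => [/allP Hz|k _]; last exact: optr_adj_ge0.
  have X0 : forall k, X k = (fun _ _ => 0).
    by move=> k; apply: optr_adj_eq0; apply/eqP; exact: (Hz k (mem_index_enum k)).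
  exists m, p, S; split=> //; split=> //; split; first by move=> k; exact: (SS k).2.
  rewrite GE; apply: opP => x y; rewrite [X in _ = _ + X]big1 ?addr0 // => k _.
  by rewrite X0 opmul0.
have fromPS : (exists m (p : 'I_m -> R[i]) (S : 'I_m -> locop R d),
          (forall k, 0 <= p k) /\ \sum_(k < m) p k = 1 /\
          (forall k, in_stab psi (S k)) /\
          (fun x y => \sum_(k < m) p k *
              opmul (opmul (opadj (tens (S k))) H) (tens (S k)) x y) = G) ->
        sep1_transforms (opapp (tens g) psi) (opapp (tens h) psi).
  case=> m [p [S [p0 [p1 [SS HG]]]]]; exact: (sep1_of_pS i0 gU hU p0 p1 SS HG).
have s1s : sep1_transforms (opapp (tens g) psi) (opapp (tens h) psi) ->
        sep_transforms (opapp (tens g) psi) (opapp (tens h) psi).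
  by case=> m [K [_ HK]]; exists m, K.
split; split.
- exact: toPS.
- by move=> /fromPS /s1s.
- by move=> /toPS /fromPS.
- exact: s1s.
Qed.
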